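(* Let $\mathcal{A}$ be a finite abelian group with $|\mathcal{A}|\ge 3$. Let $M_9(p_1,p_2)$ be the graph consisting of two triangles $v_1v_3v_4$ and $v_1v_5v_6$ sharing the vertex $v_1$, a vertex $v_2$ adjacent to $v_1$, $p_1\ge 0$ pendant vertices adjacent to $v_1$, and $p_2\ge 1$ pendant vertices adjacent to $v_2$. Then $M_9(p_1,p_2)$ is $\mathcal{A}$-vertex magic if and only if $p_1=0$ and there exist distinct elements $g,h\in\mathcal{A}\setminus\{0\}$ with $4(g-h)=0$.
   Context: A map $\ell:V(G)\to\mathcal{A}\setminus\{0\}$ is an $\mathcal{A}$-vertex magic labeling if there is $\mu\in\mathcal{A}$ with $\sum_{u\in N(v)}\ell(u)=\mu$ for every vertex $v$; $G$ is $\mathcal{A}$-vertex magic if such a labeling exists. A pendant vertex has degree $1$. *)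

(* Defs.v *)
From HB Require Import structures.
From mathcomp Require Import all_boot all_order all_algebra.
Set Implicit Arguments. Unset Strict Implicit. Unset Printing Implicit Defensive.
Import GRing.Theory.
Local Open Scope ring_scope.

Definition vertex_magic_labeling (A : zmodType) (T : finType) (adj : rel T)
  (l : T -> A) : Prop :=
  (forall v, l v != 0) /\
  exists mu : A, forall v : T, \sum_(u | adj v u) l u = mu.

Definition vertex_magic (A : zmodType) (T : finType) (adj : rel T) : Prop :=
  exists l : T -> A, vertex_magic_labeling adj l.

(* Vertices of M_9(p1,p2): inl (inl i) is v_(i+1) for i < 6,
   inl (inr k) are the p1 pendants at v1, inr k the p2 pendants at v2. *)
Definition M9V (p1 p2 : nat) : finType := ('I_6 + 'I_p1 + 'I_p2)%type.

(* edges among v1..v6 (0-indexed): triangles v1v3v4, v1v5v6, edge v1v2 *)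
Definition M9_base_edges : seq (nat * nat) :=
  [:: (0, 2); (2, 3); (3, 0); (0, 4); (4, 5); (5, 0); (0, 1)]%N.

Definition M9_adj (p1 p2 : nat) : rel (M9V p1 p2) :=
  fun x y =>
  match x, y with
  | inl (inl i), inl (inl j) =>
      ((val i, val j) \in M9_base_edges) || ((val j, val i) \in M9_base_edges)
  | inl (inl i), inl (inr _) => val i == 0%N
  | inl (inr _), inl (inl j) => val j == 0%N
  | inl (inl i), inr _ => val i == 1%N
  | inr _, inl (inl j) => val j == 1%N
  | _, _ => false
  end.

(* Main.v *)
Require Import Defs.
From HB Require Import structures.
From mathcomp Require Import all_boot all_order all_algebra.
Import GRing.Theory.
Local Open Scope ring_scope.
Lemma nsum (A : zmodType) p1 p2 (l : M9V p1 p2 -> A) (v : M9V p1 p2) :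
  \sum_(u | M9_adj v u) l u =
  \sum_(i < 6) (if M9_adj v (inl (inl i)) then l (inl (inl i)) else 0) +
  \sum_(k < p1) (if M9_adj v (inl (inr k)) then l (inl (inr k)) else 0) +
  \sum_(k < p2) (if M9_adj v (inr k) then l (inr k) else 0).
Proof. by rewrite big_mkcond /= !big_sumType. Qed.
Notation V p1 p2 i := (@inl _ 'I_p2 (@inl 'I_6 'I_p1 (@Ordinal 6 i isT))).
Lemma o1 : (lift ord0 ord0 : 'I_6) = Ordinal (isT : (1 < 6)%N). Proof. exact: val_inj. Qed.
Lemma o2 : (lift ord0 (lift ord0 ord0) : 'I_6) = Ordinal (isT : (2 < 6)%N). Proof. exact: val_inj. Qed.
Lemma o3 : (lift ord0 (lift ord0 (lift ord0 ord0)) : 'I_6) = Ordinal (isT : (3 < 6)%N). Proof. exact: val_inj. Qed.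
Lemma o4 : (lift ord0 (lift ord0 (lift ord0 (lift ord0 ord0))) : 'I_6) = Ordinal (isT : (4 < 6)%N). Proof. exact: val_inj. Qed.
Lemma o5 : (lift ord0 (lift ord0 (lift ord0 (lift ord0 (lift ord0 ord0)))) : 'I_6) = Ordinal (isT : (5 < 6)%N). Proof. exact: val_inj. Qed.
Lemma o0 : (ord0 : 'I_6) = Ordinal (isT : (0 < 6)%N). Proof. exact: val_inj. Qed.
Ltac nsimp := rewrite nsum !big_ord_recl big_ord0 /= ?o5 ?o4 ?o3 ?o2 ?o1 ?o0 ?big1_eq // ?addr0 ?add0r ?addrA; try done.
Lemma sP2 {A : zmodType} {p1 p2 : nat} (l : M9V p1 p2 -> A) k : \sum_(u | M9_adj (inr k) u) l u = l (V p1 p2 1%N).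
Proof. nsimp. Qed.
Lemma sP1 {A : zmodType} {p1 p2 : nat} (l : M9V p1 p2 -> A) k : \sum_(u | M9_adj (inl (inr k)) u) l u = l (V p1 p2 0%N).
Proof. nsimp. Qed.
Lemma s0 {A : zmodType} {p1 p2 : nat} (l : M9V p1 p2 -> A) : \sum_(u | M9_adj (V p1 p2 0%N) u) l u = l (V p1 p2 1%N) + l (V p1 p2 2%N) + l (V p1 p2 3%N)
  + l (V p1 p2 4%N) + l (V p1 p2 5%N) + \sum_(k < p1) l (inl (inr k)).
Proof. nsimp. Qed.
Lemma s1 {A : zmodType} {p1 p2 : nat} (l : M9V p1 p2 -> A) : \sum_(u | M9_adj (V p1 p2 1%N) u) l u = l (V p1 p2 0%N) + \sum_(k < p2) l (inr k).
Proof. nsimp. Qed.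
Lemma s2 {A : zmodType} {p1 p2 : nat} (l : M9V p1 p2 -> A) : \sum_(u | M9_adj (V p1 p2 2%N) u) l u = l (V p1 p2 0%N) + l (V p1 p2 3%N).
Proof. nsimp. Qed.
Lemma s3 {A : zmodType} {p1 p2 : nat} (l : M9V p1 p2 -> A) : \sum_(u | M9_adj (V p1 p2 3%N) u) l u = l (V p1 p2 0%N) + l (V p1 p2 2%N).
Proof. nsimp. Qed.
Lemma s4 {A : zmodType} {p1 p2 : nat} (l : M9V p1 p2 -> A) : \sum_(u | M9_adj (V p1 p2 4%N) u) l u = l (V p1 p2 0%N) + l (V p1 p2 5%N).
Proof. nsimp. Qed.
Lemma s5 {A : zmodType} {p1 p2 : nat} (l : M9V p1 p2 -> A) : \sum_(u | M9_adj (V p1 p2 5%N) u) l u = l (V p1 p2 0%N) + l (V p1 p2 4%N).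
Proof. nsimp. Qed.

Lemma avoid (A : finZmodType) (d : A) : (2 < #|A|)%N -> exists a : A, a != 0 /\ a != d.
Proof.
move=> HA; case: (pickP [pred x : A | (x != 0) && (x != d)]) => [a /andP [H1 H2]|H].
  by exists a.
have: (#|A| <= size [:: (0 : A)%R; d])%N.
  apply: leq_trans (card_size _); apply: subset_leq_card; apply/subsetP => x _.
  by move: (H x) => /= /negbT; rewrite negb_and !negbK !inE => /orP [] ->; rewrite ?orbT.
by rewrite /= leqNgt HA.
Qed.

Lemma decomp (A : finZmodType) n (d : A) : (2 < #|A|)%N -> (1 <= n)%N -> d != 0 ->
  exists f : 'I_n -> A, (forall i, f i != 0) /\ \sum_i f i = d.
Proof.
move=> HA; elim: n d => [|[|n] IH] d // _ Hd.
  exists (fun _ => d); split => // ; by rewrite big_ord_recl big_ord0 addr0.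
have [a [Ha0 Had]] := @avoid _ d HA.
have [|f [Hf Hs]] := IH (d - a) isT; first by rewrite subr_eq0 eq_sym.
exists (fun i : 'I_n.+2 => if (i < n.+1)%N then f (inord i) else a).
split.
  by move=> i; case: ifP.
rewrite (big_ord_recr n.+1) /= ltnn.
rewrite (eq_bigr f) ?Hs ?subrK // => i _.
by rewrite ltn_ord; congr f; apply: val_inj; rewrite /= inordK.
Qed.

Theorem proposition4p8 (A : finZmodType) (p1 p2 : nat) :
  (2 < #|A|)%N -> (1 <= p2)%N ->
  vertex_magic A (@M9_adj p1 p2) <->
  (p1 = 0%N /\
   exists g h : A, [/\ g != 0, h != 0, g != h & (g - h) *+ 4 = 0]).
Proof.
move=> HA Hp2; split.
  case=> l [Hl [mu Hmu]].
  have E1 : l (V p1 p2 1%N) = mu by rewrite -(sP2 l (Ordinal Hp2)) Hmu.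
  have E2 := Hmu (V p1 p2 2%N); rewrite s2 in E2.
  have E3 := Hmu (V p1 p2 3%N); rewrite s3 in E3.
  have E4 := Hmu (V p1 p2 4%N); rewrite s4 in E4.
  have E5 := Hmu (V p1 p2 5%N); rewrite s5 in E5.
  have E0 := Hmu (V p1 p2 0%N); rewrite s0 in E0.
  have Hp1 : p1 = 0%N.
    case: (posnP p1) => // Hp1.
    have E6 : l (V p1 p2 0%N) = mu by rewrite -(sP1 l (Ordinal Hp1)) Hmu.
    move: E2; rewrite E6 -{2}[mu]addr0 => /addrI H3.
    by move: (Hl (V p1 p2 3%N)); rewrite H3 eqxx.
  subst p1; split => //.
  exists mu, (l (V 0 p2 0%N)).
  have e3 : l (V 0 p2 3%N) = mu - l (V 0 p2 0%N) by rewrite -E2 addrAC subrr add0r.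
  have e2 : l (V 0 p2 2%N) = mu - l (V 0 p2 0%N) by rewrite -E3 addrAC subrr add0r.
  have e5 : l (V 0 p2 5%N) = mu - l (V 0 p2 0%N) by rewrite -E4 addrAC subrr add0r.
  have e4 : l (V 0 p2 4%N) = mu - l (V 0 p2 0%N) by rewrite -E5 addrAC subrr add0r.
  move: E0; rewrite big_ord0 addr0 e2 e3 e4 e5 E1 => E0.
  split.
  - by rewrite -E1 Hl.
  - exact: Hl.
  - apply/negP => /eqP Heq; move: (Hl (V 0 p2 3%N)).
    by rewrite e3 Heq subrr eqxx.
  - apply: (@addrI _ mu); rewrite addr0 !mulrS mulr0n addr0 !addrA.
    by move: E0; rewrite !addrA.
case=> -> [g [h [Hg Hh Hgh H4]]].
have Hd : g - h != 0 by rewrite subr_eq0.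
have [f [Hf Hs]] := @decomp A p2 (g - h) HA Hp2 Hd.
exists (fun x : M9V 0 p2 => match x with inl (inl i) => if val i == 0%N then h
   else if val i == 1%N then g else g - h | inl (inr k) => g | inr k => f k end).
split.
  case=> [[i|k]|k] //=.
  by case: ifP => _ //; case: ifP => _ //; rewrite subr_eq0.
exists g; case=> [[i|k]|k]; last by rewrite sP2.
  case: i => [[|[|[|[|[|[|n]]]]]] Hi] //; rewrite [Hi](bool_irrelevance _ isT).
  - rewrite s0 /= big_ord0 addr0 -[RHS]addr0 -H4 !mulrS mulr0n addr0 !addrA //.
  - by rewrite s1 /= Hs addrC subrK.
  - by rewrite s2 /= addrC subrK.
  - by rewrite s3 /= addrC subrK.
  - by rewrite s4 /= addrC subrK.
  - by rewrite s5 /= addrC subrK.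
by case: k.
Qed.
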